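(* If $\beta_1>\beta_0$ and $\beta_2>\beta_0$, then the shape process $H^3$ is ergodic (positive recurrent).
   Context: For $\beta=(\beta_0,\beta_1,\beta_2)\in(0,\infty)^3$: for $x\in\mathbb{N}^3$, with zero boundary convention $x(0)=x(4)=0$, let $V_j(x)=\mathbf 1_{\{x(j-1)>x(j)\}}+\mathbf 1_{\{x(j+1)>x(j)\}}$. The crystal process $X^3$ is the continuous-time Markov chain on $\mathbb{N}^3$ jumping from $x$ to $x+e_j$ at rate $\beta_{V_j(x)}$ ($j=1,2,3$), no other transitions; the shape process is $H^3_t=(X^3_t(1)-X^3_t(2),X^3_t(2)-X^3_t(3))\in\mathbb{Z}^2$. *)

(* Defs.v *)
From Stdlib Require Import Reals ZArith List Lia Lra.
Import ListNotations.
Open Scope R_scope.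

(* The crystal process X^3 on N^3 (as a rate description).           *)
(* Zero boundary convention: x(0) = x(4) = 0.                        *)

Definition config := (nat * nat * nat)%type.

Definition coord (x : config) (i : nat) : nat :=
  match x, i with
  | (a, _, _), 1%nat => a
  | (_, b, _), 2%nat => b
  | (_, _, c), 3%nat => c
  | _, _ => 0%nat
  end.

Definition VX (x : config) (j : nat) : nat :=
  ((if Nat.ltb (coord x j) (coord x (j - 1)) then 1 else 0) +
   (if Nat.ltb (coord x j) (coord x (j + 1)) then 1 else 0))%nat.

Definition betaV (b0 b1 b2 : R) (v : nat) : R :=
  match v with 0%nat => b0 | 1%nat => b1 | _ => b2 end.

(* rate at which X^3 jumps from x to x + e_j, j = 1,2,3 *)
Definition rateX (b0 b1 b2 : R) (x : config) (j : nat) : R :=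
  betaV b0 b1 b2 (VX x j).

Definition shape_state := (Z * Z)%type.

Definition shape (x : config) : shape_state :=
  match x with (a, b, c) =>
    (Z.of_nat a - Z.of_nat b, Z.of_nat b - Z.of_nat c)%Z end.

(* Effect on the shape of the jump x -> x + e_j. *)
Definition shape_jump (h : shape_state) (j : nat) : shape_state :=
  match j with
  | 1%nat => ((fst h + 1)%Z, snd h)
  | 2%nat => ((fst h - 1)%Z, (snd h + 1)%Z)
  | _ => (fst h, (snd h - 1)%Z)
  end.

(* V_j expressed through the shape (x(0) = x(4) = 0 and x in N^3). *)
Definition VH (h : shape_state) (j : nat) : nat :=
  match j with
  | 1%nat => if Z.ltb (fst h) 0 then 1%nat else 0%nat
  | 2%nat => ((if Z.ltb 0 (fst h) then 1 else 0) +
              (if Z.ltb (snd h) 0 then 1 else 0))%nat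
  | _ => if Z.ltb 0 (snd h) then 1%nat else 0%nat
  end.

(* The jump rates of X^3 depend on x only through its shape, so H^3 is
   itself a continuous-time Markov chain on Z^2, with these rates. *)
Lemma shape_jump_correct (x : config) (j : nat) :
  (1 <= j <= 3)%nat ->
  shape (match x, j with
         | (a, b, c), 1%nat => (S a, b, c)
         | (a, b, c), 2%nat => (a, S b, c)
         | (a, b, c), _ => (a, b, S c)
         end) = shape_jump (shape x) j.
Proof.
  destruct x as [[a b] c]; intros Hj.
  destruct j as [|[|[|[|j]]]]; try lia; cbn [shape shape_jump fst snd];
  rewrite ?Nat2Z.inj_succ; f_equal; lia.
Qed.

Lemma VX_VH (x : config) (j : nat) :
  (1 <= j <= 3)%nat -> VX x j = VH (shape x) j.
Proof.
  destruct x as [[a b] c]; intros Hj.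
  destruct j as [|[|[|[|j]]]]; try lia; unfold VX, VH; simpl;
  repeat match goal with
  | |- context [Nat.ltb ?u ?v] => destruct (Nat.ltb_spec u v)
  | |- context [Z.ltb ?u ?v] => destruct (Z.ltb_spec u v)
  end; try reflexivity; lia.
Qed.

Definition rateH (b0 b1 b2 : R) (h : shape_state) (j : nat) : R :=
  betaV b0 b1 b2 (VH h j).

Lemma rateX_rateH b0 b1 b2 x j :
  (1 <= j <= 3)%nat -> rateX b0 b1 b2 x j = rateH b0 b1 b2 (shape x) j.
Proof. intros; unfold rateX, rateH; rewrite VX_VH; auto. Qed.

Definition qtot (b0 b1 b2 : R) (h : shape_state) : R :=
  rateH b0 b1 b2 h 1 + rateH b0 b1 b2 h 2 + rateH b0 b1 b2 h 3.

(* Path-space description: embedded jump chain + exponential holding *)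
(* times (mean 1 / qtot).                                            *)

Fixpoint all_paths (n : nat) : list (list nat) :=
  match n with
  | O => [ [] ]
  | S m => flat_map (fun p => [1%nat :: p; 2%nat :: p; 3%nat :: p]) (all_paths m)
  end.

Fixpoint visited (h : shape_state) (p : list nat) : list shape_state :=
  match p with
  | [] => [h]
  | j :: q => h :: visited (shape_jump h j) q
  end.

Fixpoint endpoint (h : shape_state) (p : list nat) : shape_state :=
  match p with
  | [] => h
  | j :: q => endpoint (shape_jump h j) q
  end.

Fixpoint path_prob (b0 b1 b2 : R) (h : shape_state) (p : list nat) : R :=
  match p with
  | [] => 1
  | j :: q => (rateH b0 b1 b2 h j / qtot b0 b1 b2 h) *
              path_prob b0 b1 b2 (shape_jump h j) q
  end.

Fixpoint path_time (b0 b1 b2 : R) (h : shape_state) (p : list nat) : R :=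
  match p with
  | [] => 0
  | j :: q => / qtot b0 b1 b2 h + path_time b0 b1 b2 (shape_jump h j) q
  end.

Definition Zpair_eqb (u v : shape_state) : bool :=
  Z.eqb (fst u) (fst v) && Z.eqb (snd u) (snd v).

Definition first_return (h : shape_state) (p : list nat) : bool :=
  match p with
  | [] => false
  | j :: q =>
      Zpair_eqb (endpoint h p) h &&
      forallb (fun g => negb (Zpair_eqb g h))
              (removelast (visited (shape_jump h j) q))
  end.

Fixpoint sumR (l : list R) : R :=
  match l with [] => 0 | a :: t => a + sumR t end.

Definition ret_prob (b0 b1 b2 : R) (h : shape_state) (n : nat) : R :=
  sumR (map (fun p => if first_return h p then path_prob b0 b1 b2 h p else 0)
            (all_paths n)).

Definition ret_time (b0 b1 b2 : R) (h : shape_state) (n : nat) : R :=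
  sumR (map (fun p => if first_return h p
                      then path_prob b0 b1 b2 h p * path_time b0 b1 b2 h p
                      else 0)
            (all_paths n)).

(* h is positive recurrent for H^3: the return time T_h^+ is a.s. finite
   (the first-return probabilities sum to 1) and E_h[T_h^+] < infinity. *)
Definition positive_recurrent_state (b0 b1 b2 : R) (h : shape_state) : Prop :=
  Un_cv (fun N => sum_f_R0 (ret_prob b0 b1 b2 h) N) 1 /\
  exists m : R, Un_cv (fun N => sum_f_R0 (ret_time b0 b1 b2 h) N) m.

(* H^3 is ergodic (positive recurrent): every state is positive recurrent
   (H^3 is irreducible on Z^2, so this is the class property). *)
Definition shape_positive_recurrent (b0 b1 b2 : R) : Prop :=
  forall h : shape_state, positive_recurrent_state b0 b1 b2 h.

(* Main.v *)
Require Import Defs.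
From Stdlib Require Import Reals ZArith List Lia Lra Psatz Bool.
Import ListNotations.
Open Scope R_scope.

Definition good (b0 b1 b2 : R) : Prop := 0 < b0 /\ b0 < b1 /\ b0 < b2.

Lemma Zpair_eqb_spec u v : Zpair_eqb u v = true <-> u = v.
Proof.
  destruct u as [a b], v as [c d]; unfold Zpair_eqb; simpl.
  rewrite Bool.andb_true_iff, !Z.eqb_eq; split.
  - intros [-> ->]; auto.
  - intros H; inversion H; auto.
Qed.

Lemma rate_ge b0 b1 b2 g j : good b0 b1 b2 -> b0 <= rateH b0 b1 b2 g j.
Proof. intros [? [? ?]]; unfold rateH, betaV; destruct (VH g j) as [|[|]]; lra. Qed.

Lemma rate_le b0 b1 b2 g j : good b0 b1 b2 -> rateH b0 b1 b2 g j <= b0 + b1 + b2.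
Proof. intros [? [? ?]]; unfold rateH, betaV; destruct (VH g j) as [|[|]]; lra. Qed.

Lemma qtot_pos b0 b1 b2 g : good b0 b1 b2 -> 3 * b0 <= qtot b0 b1 b2 g.
Proof.
  intros Hg; unfold qtot; pose proof (rate_ge _ _ _ g 1 Hg);
  pose proof (rate_ge _ _ _ g 2 Hg); pose proof (rate_ge _ _ _ g 3 Hg); lra.
Qed.

Lemma qtot_le b0 b1 b2 g : good b0 b1 b2 -> qtot b0 b1 b2 g <= 3 * (b0 + b1 + b2).
Proof.
  intros Hg; unfold qtot; pose proof (rate_le _ _ _ g 1 Hg);
  pose proof (rate_le _ _ _ g 2 Hg); pose proof (rate_le _ _ _ g 3 Hg); lra.
Qed.

Definition pr b0 b1 b2 g j := rateH b0 b1 b2 g j / qtot b0 b1 b2 g.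

Lemma pr_nonneg b0 b1 b2 g j : good b0 b1 b2 -> 0 <= pr b0 b1 b2 g j.
Proof.
  intros Hg; unfold pr; pose proof (qtot_pos _ _ _ g Hg); pose proof (rate_ge _ _ _ g j Hg).
  destruct Hg. apply Rle_mult_inv_pos; lra.
Qed.

Lemma pr_sum b0 b1 b2 g : good b0 b1 b2 ->
  pr b0 b1 b2 g 1 + pr b0 b1 b2 g 2 + pr b0 b1 b2 g 3 = 1.
Proof.
  intros Hg; unfold pr; pose proof (qtot_pos _ _ _ g Hg); destruct Hg.
  assert (qtot b0 b1 b2 g <> 0) by lra.
  unfold Rdiv; rewrite <- !Rmult_plus_distr_r. fold (qtot b0 b1 b2 g).
  apply Rinv_r; auto.
Qed.

Definition piv b0 b1 b2 := b0 / (3 * (b0 + b1 + b2)).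

Lemma pr_ge b0 b1 b2 g j : good b0 b1 b2 -> piv b0 b1 b2 <= pr b0 b1 b2 g j.
Proof.
  intros Hg; unfold pr, piv; pose proof (qtot_pos _ _ _ g Hg); pose proof (qtot_le _ _ _ g Hg).
  pose proof (rate_ge _ _ _ g j Hg). destruct Hg as [? [? ?]].
  apply Rle_trans with (b0 / qtot b0 b1 b2 g).
  - unfold Rdiv; apply Rmult_le_compat_l; [lra|]. apply Rinv_le_contravar; lra.
  - unfold Rdiv; apply Rmult_le_compat_r; [|lra]. left; apply Rinv_0_lt_compat; lra.
Qed.

Lemma piv_pos b0 b1 b2 : good b0 b1 b2 -> 0 < piv b0 b1 b2 <= 1.
Proof.
  intros [? [? ?]]; unfold piv; split.
  - apply Rdiv_lt_0_compat; lra.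
  - apply Rmult_le_reg_r with (3 * (b0 + b1 + b2)); [lra|].
    unfold Rdiv; rewrite Rmult_assoc, Rinv_l; lra.
Qed.

Definition kill (h g : shape_state) (j : nat) (f : shape_state -> R) : R :=
  if Zpair_eqb (shape_jump g j) h then 0 else f (shape_jump g j).

Definition Qk b0 b1 b2 h (f : shape_state -> R) (g : shape_state) : R :=
  pr b0 b1 b2 g 1 * kill h g 1 f + pr b0 b1 b2 g 2 * kill h g 2 f +
  pr b0 b1 b2 g 3 * kill h g 3 f.

Lemma Qk_ext b0 b1 b2 h f f' g : (forall x, f x = f' x) -> Qk b0 b1 b2 h f g = Qk b0 b1 b2 h f' g.
Proof. intros H; unfold Qk, kill; rewrite !H; reflexivity. Qed.

Lemma Qk_mono b0 b1 b2 h f f' g : good b0 b1 b2 -> (forall x, f x <= f' x) ->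
  Qk b0 b1 b2 h f g <= Qk b0 b1 b2 h f' g.
Proof.
  intros Hg H; unfold Qk, kill.
  pose proof (pr_nonneg _ _ _ g 1 Hg); pose proof (pr_nonneg _ _ _ g 2 Hg);
  pose proof (pr_nonneg _ _ _ g 3 Hg).
  repeat apply Rplus_le_compat; apply Rmult_le_compat_l; auto;
  match goal with |- context [if ?b then _ else _] => destruct b end; auto; lra.
Qed.

Lemma Qk_lin b0 b1 b2 h f f' a g :
  Qk b0 b1 b2 h (fun x => a * f x + f' x) g = a * Qk b0 b1 b2 h f g + Qk b0 b1 b2 h f' g.
Proof.
  unfold Qk, kill; repeat match goal with |- context [if ?b then _ else _] => destruct b end; ring.
Qed.

Lemma Qk_bound b0 b1 b2 h f c g : good b0 b1 b2 -> (forall x, 0 <= f x <= c) ->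
  0 <= Qk b0 b1 b2 h f g <= c.
Proof.
  intros Hg H; pose proof (pr_sum _ _ _ g Hg); unfold Qk, kill.
  pose proof (pr_nonneg _ _ _ g 1 Hg); pose proof (pr_nonneg _ _ _ g 2 Hg);
  pose proof (pr_nonneg _ _ _ g 3 Hg).
  assert (0 <= c) by (destruct (H g); lra).
  repeat match goal with |- context [if ?b then _ else _] => destruct b end;
  repeat match goal with |- context [f ?x] => destruct (H x); generalize dependent (f x); intros end;
  nra.
Qed.

Lemma Qk_le_P b0 b1 b2 h f g : good b0 b1 b2 -> (forall x, 0 <= f x) ->
  Qk b0 b1 b2 h f g <= pr b0 b1 b2 g 1 * f (shape_jump g 1) + pr b0 b1 b2 g 2 * f (shape_jump g 2)
     + pr b0 b1 b2 g 3 * f (shape_jump g 3).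
Proof.
  intros Hg H; unfold Qk, kill.
  pose proof (pr_nonneg _ _ _ g 1 Hg); pose proof (pr_nonneg _ _ _ g 2 Hg);
  pose proof (pr_nonneg _ _ _ g 3 Hg).
  repeat apply Rplus_le_compat; apply Rmult_le_compat_l; auto;
  match goal with |- context [if ?b then _ else _] => destruct b end; auto; lra.
Qed.

Fixpoint Qit b0 b1 b2 h (n : nat) (f : shape_state -> R) (g : shape_state) : R :=
  match n with
  | O => f g
  | S m => Qk b0 b1 b2 h (Qit b0 b1 b2 h m f) g
  end.

Definition sv b0 b1 b2 h n g := Qit b0 b1 b2 h n (fun _ => 1) g.

Fixpoint U b0 b1 b2 h (n : nat) (g : shape_state) : R :=
  match n with
  | O => 0
  | S m => U b0 b1 b2 h m g + sv b0 b1 b2 h m g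
  end.

Lemma Qit_ext b0 b1 b2 h n f f' : (forall x, f x = f' x) -> forall g,
  Qit b0 b1 b2 h n f g = Qit b0 b1 b2 h n f' g.
Proof.
  intros H; induction n; intros g; simpl; auto. apply Qk_ext; auto.
Qed.

Lemma Qit_mono b0 b1 b2 h n f f' : good b0 b1 b2 -> (forall x, f x <= f' x) -> forall g,
  Qit b0 b1 b2 h n f g <= Qit b0 b1 b2 h n f' g.
Proof.
  intros Hg H; induction n; intros g; simpl; auto. apply Qk_mono; auto.
Qed.

Lemma sv_bound b0 b1 b2 h n g : good b0 b1 b2 -> 0 <= sv b0 b1 b2 h n g <= 1.
Proof.
  intros Hg; revert g; induction n; intros g; unfold sv; simpl; [lra|].
  apply Qk_bound; auto.
Qed.

Lemma sv_S b0 b1 b2 h n g : sv b0 b1 b2 h (S n) g = Qk b0 b1 b2 h (sv b0 b1 b2 h n) g.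
Proof. reflexivity. Qed.

Lemma sv_decr b0 b1 b2 h n g : good b0 b1 b2 -> sv b0 b1 b2 h (S n) g <= sv b0 b1 b2 h n g.
Proof.
  intros Hg; revert g; induction n; intros g.
  - apply sv_bound; auto.
  - rewrite !sv_S. apply Qk_mono; auto.
Qed.

Lemma U_rec b0 b1 b2 h n g : good b0 b1 b2 ->
  U b0 b1 b2 h (S n) g = 1 + Qk b0 b1 b2 h (U b0 b1 b2 h n) g.
Proof.
  intros Hg; revert g; induction n; intros g.
  - simpl. unfold sv; simpl. unfold Qk, kill.
    repeat match goal with |- context [if ?b then _ else _] => destruct b end; ring.
  - change (U b0 b1 b2 h (S (S n)) g) with (U b0 b1 b2 h (S n) g + sv b0 b1 b2 h (S n) g).
    rewrite IHn, sv_S.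
    rewrite (Qk_ext b0 b1 b2 h (U b0 b1 b2 h (S n)) (fun x => 1 * U b0 b1 b2 h n x + sv b0 b1 b2 h n x)).
    + rewrite Qk_lin; ring.
    + intros x; simpl; ring.
Qed.

Lemma U_split b0 b1 b2 h L N g : good b0 b1 b2 ->
  U b0 b1 b2 h (L + N) g = U b0 b1 b2 h L g + Qit b0 b1 b2 h L (U b0 b1 b2 h N) g.
Proof.
  intros Hg; revert g; induction L; intros g.
  - simpl; ring.
  - change (S L + N)%nat with (S (L + N)). rewrite !U_rec; auto.
    rewrite (Qk_ext b0 b1 b2 h (U b0 b1 b2 h (L + N))
       (fun x => 1 * U b0 b1 b2 h L x + Qit b0 b1 b2 h L (U b0 b1 b2 h N) x)).
    + rewrite Qk_lin; simpl; ring.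
    + intros x; rewrite IHL; ring.
Qed.

Lemma U_nonneg b0 b1 b2 h n g : good b0 b1 b2 -> 0 <= U b0 b1 b2 h n g.
Proof.
  intros Hg; induction n; simpl; [lra|]. pose proof (sv_bound b0 b1 b2 h n g Hg); lra.
Qed.

Lemma U_le_n b0 b1 b2 h n g : good b0 b1 b2 -> U b0 b1 b2 h n g <= INR n.
Proof.
  intros Hg; induction n; [simpl; lra|]. pose proof (sv_bound b0 b1 b2 h n g Hg).
  rewrite S_INR. change (U b0 b1 b2 h (S n) g) with (U b0 b1 b2 h n g + sv b0 b1 b2 h n g); lra.
Qed.

Lemma U_mono b0 b1 b2 h n m g : good b0 b1 b2 -> (n <= m)%nat ->
  U b0 b1 b2 h n g <= U b0 b1 b2 h m g.
Proof.
  intros Hg Hnm; induction Hnm; [lra|]. simpl. pose proof (sv_bound b0 b1 b2 h m g Hg); lra.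
Qed.

Lemma Qit_lin_const b0 b1 b2 h n (K : R) f g :
  Qit b0 b1 b2 h n (fun x => K + f x) g = K * sv b0 b1 b2 h n g + Qit b0 b1 b2 h n f g.
Proof.
  revert g; induction n; intros g; unfold sv; simpl; [ring|].
  rewrite (Qk_ext b0 b1 b2 h _ (fun x => K * Qit b0 b1 b2 h n (fun _ => 1) x + Qit b0 b1 b2 h n f x)).
  - apply Qk_lin.
  - intros x; apply IHn.
Qed.

Definition Vf (g : shape_state) : R :=
  let x := IZR (fst g) in let y := IZR (snd g) in x * x + x * y + y * y.

Lemma Vf_nonneg g : 0 <= Vf g.
Proof. unfold Vf. nra. Qed.

Definition n1 (g : shape_state) : R := Rabs (IZR (fst g)) + Rabs (IZR (snd g)).

Lemma rlin_bound b0 b1 b2 g : good b0 b1 b2 ->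
  let x := IZR (fst g) in let y := IZR (snd g) in
  rateH b0 b1 b2 g 1 * (2 * x + y) + rateH b0 b1 b2 g 2 * (y - x) + rateH b0 b1 b2 g 3 * (- x - 2 * y)
  <= - Rmin (b1 - b0) (b2 - b0) * (Rabs x + Rabs y).
Proof.
  intros [Hb0 [Hb1 Hb2]]; destruct g as [a b]; simpl.
  assert (Hd1 : Rmin (b1 - b0) (b2 - b0) <= b1 - b0) by apply Rmin_l.
  assert (Hd2 : Rmin (b1 - b0) (b2 - b0) <= b2 - b0) by apply Rmin_r.
  assert (Hd0 : 0 < Rmin (b1 - b0) (b2 - b0)) by (apply Rmin_glb_lt; lra).
  set (d := Rmin (b1 - b0) (b2 - b0)) in *.
  unfold rateH, VH; simpl.
  destruct (Z.ltb_spec a 0) as [Ha|Ha]; destruct (Z.ltb_spec 0 a) as [Ha'|Ha'];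
  destruct (Z.ltb_spec b 0) as [Hb|Hb]; destruct (Z.ltb_spec 0 b) as [Hb'|Hb']; try lia;
  simpl betaV;
  repeat match goal with
  | H : (?u < ?v)%Z |- _ => apply IZR_lt in H
  | H : (?u <= ?v)%Z |- _ => apply IZR_le in H
  end;
  set (x := IZR a) in *; set (y := IZR b) in *;
  repeat match goal with |- context [Rabs ?z] =>
    let H := fresh in destruct (Rle_lt_dec 0 z) as [H|H];
    [rewrite (Rabs_pos_eq z H) | rewrite (Rabs_left z H)] end;
  try (assert (x = 0) by lra); try (assert (y = 0) by lra); nra.
Qed.

Definition dlt b0 b1 b2 := Rmin (b1 - b0) (b2 - b0).

Lemma dlt_pos b0 b1 b2 : good b0 b1 b2 -> 0 < dlt b0 b1 b2.
Proof. intros [? [? ?]]; unfold dlt; apply Rmin_glb_lt; lra. Qed.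

Lemma Vf_jumps g :
  let x := IZR (fst g) in let y := IZR (snd g) in
  Vf (shape_jump g 1) = Vf g + (2 * x + y) + 1 /\
  Vf (shape_jump g 2) = Vf g + (y - x) + 1 /\
  Vf (shape_jump g 3) = Vf g + (- x - 2 * y) + 1.
Proof.
  destruct g as [a b]; unfold Vf; simpl.
  rewrite ?plus_IZR, ?minus_IZR; repeat split; ring.
Qed.

Lemma drift b0 b1 b2 h g : good b0 b1 b2 ->
  Qk b0 b1 b2 h Vf g <= Vf g + 1 - dlt b0 b1 b2 * n1 g / qtot b0 b1 b2 g.
Proof.
  intros Hg.
  eapply Rle_trans; [apply Qk_le_P; auto; apply Vf_nonneg|].
  pose proof (rlin_bound b0 b1 b2 g Hg) as Hr. simpl in Hr.
  destruct (Vf_jumps g) as [E1 [E2 E3]]. rewrite E1, E2, E3.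
  pose proof (qtot_pos _ _ _ g Hg). pose proof Hg as [Hb0 _].
  unfold pr, n1, dlt in *. unfold qtot in *.
  set (r1 := rateH b0 b1 b2 g 1) in *. set (r2 := rateH b0 b1 b2 g 2) in *.
  set (r3 := rateH b0 b1 b2 g 3) in *.
  set (x := IZR (fst g)) in *. set (y := IZR (snd g)) in *.
  set (d := Rmin (b1 - b0) (b2 - b0)) in *.
  assert (Heq : r1 / (r1 + r2 + r3) * (Vf g + (2 * x + y) + 1) +
   r2 / (r1 + r2 + r3) * (Vf g + (y - x) + 1) + r3 / (r1 + r2 + r3) * (Vf g + (- x - 2 * y) + 1)
   = Vf g + 1 + (r1 * (2 * x + y) + r2 * (y - x) + r3 * (- x - 2 * y)) / (r1 + r2 + r3)).
  { field. lra. }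
  rewrite Heq.
  assert (Hd : (r1 * (2 * x + y) + r2 * (y - x) + r3 * (- x - 2 * y)) / (r1 + r2 + r3)
               <= - d * (Rabs x + Rabs y) / (r1 + r2 + r3)).
  { unfold Rdiv; apply Rmult_le_compat_r; auto. left; apply Rinv_0_lt_compat; lra. }
  unfold Rdiv in *. lra.
Qed.

Lemma drift1 b0 b1 b2 h g : good b0 b1 b2 -> Qk b0 b1 b2 h Vf g <= Vf g + 1.
Proof.
  intros Hg. pose proof (drift b0 b1 b2 h g Hg). pose proof (dlt_pos _ _ _ Hg).
  pose proof (qtot_pos _ _ _ g Hg). pose proof Hg as [Hb0 _].
  assert (0 <= dlt b0 b1 b2 * n1 g / qtot b0 b1 b2 g).
  { unfold n1; apply Rle_mult_inv_pos; [|lra].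
    apply Rmult_le_pos; [lra|]. pose proof (Rabs_pos (IZR (fst g))); pose proof (Rabs_pos (IZR (snd g))); lra. }
  lra.
Qed.

Lemma Qit_V b0 b1 b2 h n g : good b0 b1 b2 -> Qit b0 b1 b2 h n Vf g <= Vf g + INR n.
Proof.
  intros Hg; revert g; induction n; intros g; simpl Qit; [simpl; lra|].
  rewrite S_INR.
  eapply Rle_trans; [apply Qk_mono; [auto| exact IHn]|].
  rewrite (Qk_ext _ _ _ _ _ (fun x => 1 * Vf x + (fun _ => INR n) x)) by (intros; simpl; ring).
  rewrite Qk_lin. pose proof (drift1 b0 b1 b2 h g Hg).
  pose proof (pos_INR n).
  destruct (Qk_bound b0 b1 b2 h (fun _ => INR n) (INR n) g Hg); [intros; lra|].
  rewrite Rmult_1_l. apply Rle_trans with (Vf g + 1 + INR n); [apply Rplus_le_compat; auto|]. lra.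
Qed.

Definition psi (a b : Z) : Z := (a - b + 3 * Z.max 0 (Z.max (- a) b))%Z.
Definition psig (h g : shape_state) : Z := psi (fst h - fst g) (snd h - snd g).

Lemma psig_nonneg h g : (0 <= psig h g)%Z.
Proof. unfold psig, psi; lia. Qed.

Lemma psig_zero h g : psig h g = 0%Z -> g = h.
Proof.
  destruct h as [h1 h2], g as [g1 g2]; unfold psig, psi; cbn [fst snd]; intros H.
  assert (g1 = h1 /\ g2 = h2) as [-> ->] by lia. reflexivity.
Qed.

Lemma psig_le h g : (psig h g <= 4 * (Z.abs (fst h - fst g) + Z.abs (snd h - snd g)))%Z.
Proof. unfold psig, psi; lia. Qed.

Lemma psig_step h g : g <> h -> exists j, (j = 1 \/ j = 2 \/ j = 3)%nat /\
   psig h (shape_jump g j) = (psig h g - 1)%Z.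
Proof.
  destruct h as [h1 h2], g as [g1 g2]; intros Hne; unfold psig, psi; cbn [fst snd shape_jump].
  set (a := (h1 - g1)%Z). set (b := (h2 - g2)%Z).
  assert (Hab : a <> 0%Z \/ b <> 0%Z).
  { destruct (Z.eq_dec a 0); destruct (Z.eq_dec b 0); auto.
    exfalso; apply Hne; f_equal; unfold a, b in *; lia. }
  destruct (Z_le_gt_dec 1 a).
  { exists 1%nat; split; auto; cbn [fst snd shape_jump]; unfold a, b in *; lia. }
  destruct (Z_le_gt_dec (b + 1) (Z.max 0 (- a))).
  { exists 3%nat; split; auto; cbn [fst snd shape_jump]; unfold a, b in *; lia. }
  exists 2%nat; split; auto; cbn [fst snd shape_jump]; unfold a, b in *; lia.
Qed.

Lemma psig_self_jump h j : (j = 1 \/ j = 2 \/ j = 3)%nat -> psig h (shape_jump h j) = 2%Z.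
Proof.
  destruct h as [h1 h2]; intros [ -> | [ -> | -> ] ]; unfold psig, psi; cbn [fst snd shape_jump]; lia.
Qed.

Lemma jump_neq g j : (j = 1 \/ j = 2 \/ j = 3)%nat -> Zpair_eqb (shape_jump g j) g = false.
Proof.
  intros Hj. destruct (Zpair_eqb (shape_jump g j) g) eqn:E; auto.
  apply Zpair_eqb_spec in E. destruct g as [a b].
  destruct Hj as [ -> | [ -> | -> ] ]; simpl in E; inversion E; lia.
Qed.

Lemma kill_bound b0 b1 b2 h g j m : good b0 b1 b2 ->
  0 <= kill h g j (sv b0 b1 b2 h m) <= 1.
Proof.
  intros Hg; unfold kill; destruct (Zpair_eqb _ _); [lra|]. apply sv_bound; auto.
Qed.

Lemma escape b0 b1 b2 h k : good b0 b1 b2 -> forall g m,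
  (1 <= psig h g <= Z.of_nat k)%Z -> (k <= m)%nat ->
  sv b0 b1 b2 h m g <= 1 - piv b0 b1 b2 ^ k.
Proof.
  intros Hg; induction k as [|k IH]; intros g m Hp Hkm; [lia|].
  destruct m as [|m]; [lia|].
  rewrite sv_S. unfold Qk.
  assert (Hgh : g <> h) by (intros ->; unfold psig, psi in Hp; lia).
  destruct (psig_step h g Hgh) as [j [Hj Hps]].
  pose proof (piv_pos _ _ _ Hg) as [Hp0 Hp1].
  assert (HP : 0 < piv b0 b1 b2 ^ k <= 1).
  { split; [apply pow_lt; lra|]. rewrite <- (pow1 k); apply pow_incr; lra. }   
  assert (Hkj : kill h g j (sv b0 b1 b2 h m) <= 1 - piv b0 b1 b2 ^ k).
  { unfold kill. destruct (Zpair_eqb (shape_jump g j) h) eqn:E; [lra|].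
    apply IH; [|lia].
    assert (shape_jump g j <> h) by (intros Hc; apply Zpair_eqb_spec in Hc; congruence).
    split; [|lia]. destruct (Z.eq_dec (psig h (shape_jump g j)) 0) as [Hz|Hz].
    - apply psig_zero in Hz; congruence.
    - pose proof (psig_nonneg h (shape_jump g j)); lia. }
  pose proof (pr_sum _ _ _ g Hg).
  pose proof (pr_ge _ _ _ g j Hg).
  pose proof (pr_nonneg _ _ _ g 1 Hg); pose proof (pr_nonneg _ _ _ g 2 Hg);
  pose proof (pr_nonneg _ _ _ g 3 Hg).
  pose proof (kill_bound b0 b1 b2 h g 1 m Hg); pose proof (kill_bound b0 b1 b2 h g 2 m Hg);
  pose proof (kill_bound b0 b1 b2 h g 3 m Hg).
  simpl pow.
  set (P := piv b0 b1 b2 ^ k) in *. set (pv := piv b0 b1 b2) in *.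
  destruct Hj as [ -> | [ -> | -> ] ];
  set (p1 := pr b0 b1 b2 g 1) in *; set (p2 := pr b0 b1 b2 g 2) in *; set (p3 := pr b0 b1 b2 g 3) in *;
  set (t1 := kill h g 1 (sv b0 b1 b2 h m)) in *;
  set (t2 := kill h g 2 (sv b0 b1 b2 h m)) in *;
  set (t3 := kill h g 3 (sv b0 b1 b2 h m)) in *; nra.
Qed.

Definition Rad b0 b1 b2 (h : shape_state) : Z :=
  Z.max (Z.abs (fst h) + Z.abs (snd h)) (up (6 * (b0 + b1 + b2) / dlt b0 b1 b2)).
Definition Lh b0 b1 b2 h : nat := S (S (S (Z.to_nat (8 * Rad b0 b1 b2 h)))).
Definition Kc b0 b1 b2 h : R :=
  2 * INR (Lh b0 b1 b2 h) / piv b0 b1 b2 ^ Lh b0 b1 b2 h.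
Definition Wf b0 b1 b2 h (g : shape_state) : R := Kc b0 b1 b2 h + Vf g.

Lemma n1_IZR g : n1 g = IZR (Z.abs (fst g) + Z.abs (snd g)).
Proof. unfold n1; rewrite plus_IZR, !abs_IZR; reflexivity. Qed.

Lemma outside_drift b0 b1 b2 h g : good b0 b1 b2 ->
  (Rad b0 b1 b2 h < Z.abs (fst g) + Z.abs (snd g))%Z ->
  Qk b0 b1 b2 h Vf g <= Vf g - 1.
Proof.
  intros Hg Hout. pose proof (drift b0 b1 b2 h g Hg).
  pose proof (dlt_pos _ _ _ Hg) as Hd. pose proof (qtot_pos _ _ _ g Hg).
  pose proof (qtot_le _ _ _ g Hg). pose proof Hg as [Hb0 [Hb1 Hb2]].
  assert (Hu : (up (6 * (b0 + b1 + b2) / dlt b0 b1 b2) < Z.abs (fst g) + Z.abs (snd g))%Z).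
  { unfold Rad in Hout; lia. }
  apply IZR_lt in Hu. destruct (archimed (6 * (b0 + b1 + b2) / dlt b0 b1 b2)) as [Ha _].
  rewrite <- n1_IZR in Hu.
  assert (6 * (b0 + b1 + b2) < dlt b0 b1 b2 * n1 g).
  { assert (Ee : 6 * (b0 + b1 + b2) = dlt b0 b1 b2 * (6 * (b0 + b1 + b2) / dlt b0 b1 b2)) by (field; lra).
    rewrite Ee at 1. apply Rmult_lt_compat_l; lra. }
  assert (2 <= dlt b0 b1 b2 * n1 g / qtot b0 b1 b2 g).
  { apply Rmult_le_reg_r with (qtot b0 b1 b2 g); [lra|].
    unfold Rdiv; rewrite Rmult_assoc, Rinv_l by lra. lra. }
  lra.
Qed.

Lemma piv_pow_pos b0 b1 b2 n : good b0 b1 b2 -> 0 < piv b0 b1 b2 ^ n <= 1.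
Proof.
  intros Hg; pose proof (piv_pos _ _ _ Hg). split; [apply pow_lt; lra|].
  rewrite <- (pow1 n); apply pow_incr; lra.
Qed.

Lemma sv_L_bound b0 b1 b2 h g : good b0 b1 b2 ->
  (Z.abs (fst g) + Z.abs (snd g) <= Rad b0 b1 b2 h)%Z ->
  sv b0 b1 b2 h (Lh b0 b1 b2 h) g <= 1 - piv b0 b1 b2 ^ Lh b0 b1 b2 h.
Proof.
  intros Hg HB.
  assert (HR : (Z.abs (fst h) + Z.abs (snd h) <= Rad b0 b1 b2 h)%Z) by (unfold Rad; lia).
  assert (HL : (8 * Rad b0 b1 b2 h + 3 <= Z.of_nat (Lh b0 b1 b2 h))%Z) by (unfold Lh; lia).
  destruct (Zpair_eqb g h) eqn:E.
  - apply Zpair_eqb_spec in E; subst g.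
    unfold Lh. set (L' := S (S (Z.to_nat (8 * Rad b0 b1 b2 h)))).
    rewrite sv_S. unfold Qk, kill. rewrite !jump_neq by lia.
    assert (Hn : forall j, (j = 1 \/ j = 2 \/ j = 3)%nat ->
       sv b0 b1 b2 h L' (shape_jump h j) <= 1 - piv b0 b1 b2 ^ L').
    { intros j Hj. apply escape; auto. rewrite psig_self_jump by auto. unfold L'; lia. }
    pose proof (Hn 1%nat ltac:(lia)); pose proof (Hn 2%nat ltac:(lia)); pose proof (Hn 3%nat ltac:(lia)).
    pose proof (pr_sum _ _ _ h Hg).
    pose proof (pr_nonneg _ _ _ h 1 Hg); pose proof (pr_nonneg _ _ _ h 2 Hg);
    pose proof (pr_nonneg _ _ _ h 3 Hg).
    pose proof (piv_pos _ _ _ Hg). pose proof (piv_pow_pos b0 b1 b2 L' Hg).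
    change (piv b0 b1 b2 ^ S L') with (piv b0 b1 b2 * piv b0 b1 b2 ^ L').
    set (P := piv b0 b1 b2 ^ L') in *.
    assert (piv b0 b1 b2 * P <= P) by nra.
    nra.
  - assert (Hne : g <> h) by (intros ->; destruct h; unfold Zpair_eqb in E; simpl in E; rewrite !Z.eqb_refl in E; discriminate).
    apply escape; auto. split.
    + destruct (Z.eq_dec (psig h g) 0) as [Hz|Hz].
      * apply psig_zero in Hz; congruence.
      * pose proof (psig_nonneg h g); lia.
    + pose proof (psig_le h g). lia.
Qed.

Lemma main_bound b0 b1 b2 h : good b0 b1 b2 -> forall N g, U b0 b1 b2 h N g <= Wf b0 b1 b2 h g.
Proof.
  intros Hg.
  set (L := Lh b0 b1 b2 h). set (eta := piv b0 b1 b2 ^ L).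
  pose proof (piv_pow_pos b0 b1 b2 L Hg) as Heta. fold eta in Heta.
  assert (HK : Kc b0 b1 b2 h * eta = 2 * INR L).
  { unfold Kc; fold L; fold eta. field. lra. }
  assert (HKL : INR L <= Kc b0 b1 b2 h).
  { pose proof (pos_INR L). nra. }
  assert (HK0 : 0 <= Kc b0 b1 b2 h) by (pose proof (pos_INR L); lra).
  assert (Hall : forall N M, (M <= N)%nat -> forall g, U b0 b1 b2 h M g <= Wf b0 b1 b2 h g).
  2:{ intros N g; apply (Hall N N); lia. }
  induction N as [|N IH]; intros M HM g.
  - assert (M = 0%nat) by lia; subst; simpl. unfold Wf; pose proof (Vf_nonneg g); lra.
  - destruct (Z_le_gt_dec (Z.abs (fst g) + Z.abs (snd g)) (Rad b0 b1 b2 h)) as [HB|HB].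
    + destruct (le_lt_dec M L) as [HML|HML].
      * pose proof (U_le_n b0 b1 b2 h M g Hg). apply le_INR in HML.
        unfold Wf; pose proof (Vf_nonneg g); lra.
      * replace M with (L + (M - L))%nat by lia. rewrite U_split by auto.
        pose proof (U_le_n b0 b1 b2 h L g Hg).
        assert (Hq : Qit b0 b1 b2 h L (U b0 b1 b2 h (M - L)) g <= Qit b0 b1 b2 h L (Wf b0 b1 b2 h) g).
        { apply Qit_mono; auto. intros x; apply IH. assert (1 <= L)%nat by (unfold L, Lh; lia). lia. }
        unfold Wf in Hq. rewrite Qit_lin_const in Hq.
        pose proof (Qit_V b0 b1 b2 h L g Hg).
        pose proof (sv_L_bound b0 b1 b2 h g Hg HB). fold L eta in H1.
        unfold Wf.
        assert (Kc b0 b1 b2 h * sv b0 b1 b2 h L g <= Kc b0 b1 b2 h * (1 - eta))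
          by (apply Rmult_le_compat_l; auto).
        nra.
    + destruct M as [|M]; [simpl; unfold Wf; pose proof (Vf_nonneg g); lra|].
      rewrite U_rec by auto.
      assert (Hq : Qk b0 b1 b2 h (U b0 b1 b2 h M) g <= Qk b0 b1 b2 h (Wf b0 b1 b2 h) g).
      { apply Qk_mono; auto. intros x; apply IH; lia. }
      rewrite (Qk_ext _ _ _ _ (Wf b0 b1 b2 h) (fun x => Kc b0 b1 b2 h * (fun _ => 1) x + Vf x)) in Hq
        by (intros; unfold Wf; ring).
      rewrite Qk_lin in Hq.
      destruct (Qk_bound b0 b1 b2 h (fun _ => 1) 1 g Hg); [intros; lra|].
      pose proof (outside_drift b0 b1 b2 h g Hg ltac:(lia)).
      unfold Wf. nra.
Qed.
Local Open Scope bool_scope.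
Local Open Scope R_scope.

Lemma sumR_app a b : sumR (a ++ b) = sumR a + sumR b.
Proof. induction a; simpl; [ring|rewrite IHa; ring]. Qed.

Lemma sumR_flat_map {A B} (F : B -> R) (G : A -> list B) l :
  sumR (map F (flat_map G l)) = sumR (map (fun x => sumR (map F (G x))) l).
Proof. induction l; simpl; auto. rewrite map_app, sumR_app, IHl; reflexivity. Qed.

Lemma sumR_ext {A} (F G : A -> R) l : (forall x, F x = G x) -> sumR (map F l) = sumR (map G l).
Proof. intros H; induction l; simpl; auto. rewrite H, IHl; auto. Qed.

Lemma sumR_le {A} (F G : A -> R) l : (forall x, In x l -> F x <= G x) -> sumR (map F l) <= sumR (map G l).
Proof.
  intros H; induction l; simpl; [lra|]. apply Rplus_le_compat; auto with datatypes.
Qed.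

Lemma sumR_nonneg {A} (F : A -> R) l : (forall x, 0 <= F x) -> 0 <= sumR (map F l).
Proof. intros H; induction l; simpl; [lra|]. pose proof (H a); lra. Qed.

Lemma sumR_plus {A} (F G : A -> R) l : sumR (map (fun x => F x + G x) l) = sumR (map F l) + sumR (map G l).
Proof. induction l; simpl; [ring|rewrite IHl; ring]. Qed.

Lemma sumR_scal {A} (F : A -> R) c l : sumR (map (fun x => c * F x) l) = c * sumR (map F l).
Proof. induction l; simpl; [ring|rewrite IHl; ring]. Qed.

Lemma sumR_all_paths_S (F : list nat -> R) n :
  sumR (map F (all_paths (S n))) =
  sumR (map (fun p => F (1%nat :: p) + F (2%nat :: p) + F (3%nat :: p)) (all_paths n)).
Proof.
  simpl all_paths. rewrite sumR_flat_map. apply sumR_ext. intros p; simpl; ring.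
Qed.

Lemma all_paths_length n p : In p (all_paths n) -> length p = n.
Proof.
  revert p; induction n; intros p Hp; simpl in Hp.
  - destruct Hp as [<-|[]]; auto.
  - apply in_flat_map in Hp. destruct Hp as [q [Hq Hin]].
    simpl in Hin; destruct Hin as [<-|[<-|[<-|[]]]]; simpl; rewrite (IHn q Hq); auto.
Qed.

Definition Aok (h g : shape_state) (q : list nat) : bool :=
  Zpair_eqb (endpoint g q) h &&
  forallb (fun x => negb (Zpair_eqb x h)) (removelast (visited g q)).

Lemma Aok_cons h g j q : Aok h g (j :: q) = negb (Zpair_eqb g h) && Aok h (shape_jump g j) q.
Proof.
  unfold Aok. simpl endpoint.
  assert (E : removelast (visited g (j :: q)) = g :: removelast (visited (shape_jump g j) q)).
  { simpl. destruct q; reflexivity. }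
  rewrite E. simpl forallb. destruct (Zpair_eqb (endpoint (shape_jump g j) q) h);
  destruct (Zpair_eqb g h); reflexivity.
Qed.

Definition Fp b0 b1 b2 h n g :=
  sumR (map (fun q => if Aok h g q then path_prob b0 b1 b2 g q else 0) (all_paths n)).

Lemma Fp_0 b0 b1 b2 h g : Fp b0 b1 b2 h 0 g = if Zpair_eqb g h then 1 else 0.
Proof. unfold Fp, Aok; simpl. destruct (Zpair_eqb g h); simpl; ring. Qed.

Lemma Fp_S b0 b1 b2 h n g : Fp b0 b1 b2 h (S n) g =
  if Zpair_eqb g h then 0 else
  pr b0 b1 b2 g 1 * Fp b0 b1 b2 h n (shape_jump g 1) +
  pr b0 b1 b2 g 2 * Fp b0 b1 b2 h n (shape_jump g 2) +
  pr b0 b1 b2 g 3 * Fp b0 b1 b2 h n (shape_jump g 3).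
Proof.
  unfold Fp. rewrite sumR_all_paths_S.
  destruct (Zpair_eqb g h) eqn:E.
  - rewrite (sumR_ext _ (fun p => 0 * 0) ).
    + rewrite sumR_scal; ring.
    + intros p; rewrite !Aok_cons, E; simpl; ring.
  - rewrite (sumR_ext _ (fun p =>
      pr b0 b1 b2 g 1 * (if Aok h (shape_jump g 1) p then path_prob b0 b1 b2 (shape_jump g 1) p else 0) +
      pr b0 b1 b2 g 2 * (if Aok h (shape_jump g 2) p then path_prob b0 b1 b2 (shape_jump g 2) p else 0) +
      pr b0 b1 b2 g 3 * (if Aok h (shape_jump g 3) p then path_prob b0 b1 b2 (shape_jump g 3) p else 0))).
    + rewrite !sumR_plus, !sumR_scal. reflexivity.
    + intros p; rewrite !Aok_cons, E; simpl.
      unfold pr.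
      repeat match goal with |- context [if ?b then _ else _] => destruct b end; ring.
Qed.

Lemma Fp_sv b0 b1 b2 h n g : good b0 b1 b2 ->
  Fp b0 b1 b2 h (S n) g = if Zpair_eqb g h then 0 else sv b0 b1 b2 h n g - sv b0 b1 b2 h (S n) g.
Proof.
  intros Hg; revert g; induction n; intros g.
  - rewrite Fp_S, !Fp_0. destruct (Zpair_eqb g h); auto.
    pose proof (pr_sum _ _ _ g Hg).
    rewrite sv_S; unfold sv; cbn [Qit]; unfold Qk, kill.
    repeat match goal with |- context [if ?b then _ else _] => destruct b end; lra.
  - rewrite Fp_S, !IHn. destruct (Zpair_eqb g h); auto.
    rewrite (sv_S _ _ _ _ n g), (sv_S _ _ _ _ (S n) g). unfold Qk, kill.
    repeat match goal with |- context [if ?b then _ else _] => destruct b end; ring.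
Qed.

Lemma ret_prob_0 b0 b1 b2 h : ret_prob b0 b1 b2 h 0 = 0.
Proof. unfold ret_prob; simpl; ring. Qed.

Lemma ret_prob_S b0 b1 b2 h n : good b0 b1 b2 ->
  ret_prob b0 b1 b2 h (S n) = sv b0 b1 b2 h n h - sv b0 b1 b2 h (S n) h.
Proof.
  intros Hg.
  assert (E : ret_prob b0 b1 b2 h (S n) =
    pr b0 b1 b2 h 1 * Fp b0 b1 b2 h n (shape_jump h 1) +
    pr b0 b1 b2 h 2 * Fp b0 b1 b2 h n (shape_jump h 2) +
    pr b0 b1 b2 h 3 * Fp b0 b1 b2 h n (shape_jump h 3)).
  { unfold ret_prob, Fp. rewrite sumR_all_paths_S.
    rewrite <- !sumR_scal, <- !sumR_plus. apply sumR_ext. intros p.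
    change (first_return h (1%nat :: p)) with (Aok h (shape_jump h 1) p).
    change (first_return h (2%nat :: p)) with (Aok h (shape_jump h 2) p).
    change (first_return h (3%nat :: p)) with (Aok h (shape_jump h 3) p).
    simpl path_prob; unfold pr.
    repeat match goal with |- context [if ?b then _ else _] => destruct b end; ring. }
  rewrite E. pose proof (pr_sum _ _ _ h Hg).
  destruct n.
  - rewrite !Fp_0, !jump_neq by lia.
    rewrite sv_S; unfold sv; cbn [Qit]; unfold Qk, kill; rewrite !jump_neq by lia. lra.
  - rewrite !Fp_sv, !jump_neq by (auto; lia).
    rewrite (sv_S _ _ _ _ (S n) h), (sv_S _ _ _ _ n h). unfold Qk at 1 2, kill at 1 2 3 4 5 6; rewrite !jump_neq by lia. ring.
Qed.

Lemma sum_ret_prob b0 b1 b2 h N : good b0 b1 b2 ->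
  sum_f_R0 (ret_prob b0 b1 b2 h) N = 1 - sv b0 b1 b2 h N h.
Proof.
  intros Hg; induction N; simpl.
  - rewrite ret_prob_0; unfold sv; simpl; ring.
  - rewrite IHN, ret_prob_S by auto. ring.
Qed.

Lemma path_prob_nonneg b0 b1 b2 g p : good b0 b1 b2 -> 0 <= path_prob b0 b1 b2 g p.
Proof.
  intros Hg; revert g; induction p; intros g; simpl; [lra|].
  apply Rmult_le_pos; auto. apply (pr_nonneg _ _ _ g a Hg).
Qed.

Lemma path_time_bound b0 b1 b2 g p : good b0 b1 b2 ->
  0 <= path_time b0 b1 b2 g p <= INR (length p) * / (3 * b0).
Proof.
  intros Hg; pose proof Hg as [Hb0 _]; revert g; induction p; intros g; simpl length; simpl path_time.
  - simpl; lra.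
  - rewrite S_INR. destruct (IHp (shape_jump g a)).
    pose proof (qtot_pos _ _ _ g Hg).
    assert (0 < / qtot b0 b1 b2 g) by (apply Rinv_0_lt_compat; lra).
    assert (/ qtot b0 b1 b2 g <= / (3 * b0)) by (apply Rinv_le_contravar; lra).
    lra.
Qed.

Lemma ret_time_bound b0 b1 b2 h n : good b0 b1 b2 ->
  0 <= ret_time b0 b1 b2 h n <= / (3 * b0) * (INR n * ret_prob b0 b1 b2 h n).
Proof.
  intros Hg; split.
  - unfold ret_time; apply sumR_nonneg. intros p; destruct (first_return h p); [|lra].
    apply Rmult_le_pos; [apply path_prob_nonneg; auto| apply path_time_bound; auto].
  - unfold ret_time, ret_prob. rewrite <- sumR_scal, <- sumR_scal.
    apply sumR_le. intros p Hp. apply all_paths_length in Hp.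
    destruct (first_return h p); [|lra].
    pose proof (path_prob_nonneg b0 b1 b2 h p Hg). pose proof (path_time_bound b0 b1 b2 h p Hg).
    rewrite Hp in H0. nra.
Qed.

Lemma weighted_sum b0 b1 b2 h N : good b0 b1 b2 ->
  sum_f_R0 (fun n => INR n * ret_prob b0 b1 b2 h n) N + INR N * sv b0 b1 b2 h N h = U b0 b1 b2 h N h.
Proof.
  intros Hg; induction N.
  - simpl; ring.
  - change (sum_f_R0 ?f (S N)) with (sum_f_R0 f N + f (S N)); cbv beta. rewrite ret_prob_S by auto.
    change (U b0 b1 b2 h (S N) h) with (U b0 b1 b2 h N h + sv b0 b1 b2 h N h).
    rewrite <- IHN, S_INR. ring.
Qed.

Lemma sv_U b0 b1 b2 h n g : good b0 b1 b2 -> INR (S n) * sv b0 b1 b2 h n g <= U b0 b1 b2 h (S n) g.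
Proof.
  intros Hg; induction n.
  - simpl; lra.
  - change (U b0 b1 b2 h (S (S n)) g) with (U b0 b1 b2 h (S n) g + sv b0 b1 b2 h (S n) g).
    pose proof (sv_decr b0 b1 b2 h n g Hg). pose proof (pos_INR (S n)).
    rewrite S_INR. nra.
Qed.

Lemma sum_le_scal (f g : nat -> R) c N : (forall n, f n <= c * g n) ->
  sum_f_R0 f N <= c * sum_f_R0 g N.
Proof.
  intros H; induction N; simpl; [apply H|]. specialize (H (S N)). nra.
Qed.

Theorem corollary7 (b0 b1 b2 : R) :
  0 < b0 -> 0 < b1 -> 0 < b2 ->
  b1 > b0 -> b2 > b0 ->
  shape_positive_recurrent b0 b1 b2.
Proof.
  intros Hb0 Hb1 Hb2 H10 H20 h.
  assert (Hg : good b0 b1 b2) by (unfold good; lra).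
  set (C := Wf b0 b1 b2 h h).
  assert (HC : forall N, U b0 b1 b2 h N h <= C) by (intros; apply main_bound; auto).
  assert (HC0 : 0 <= C) by (pose proof (HC 0%nat); simpl in *; lra).
  split.
  - intros eps Heps.
    assert (Hq : 0 < eps / (C + 1)) by (apply Rdiv_lt_0_compat; lra).
    destruct (archimed_cor1 _ Hq) as [N0 [HN0 HN0p]].
    exists N0. intros n Hn. unfold R_dist. rewrite sum_ret_prob by auto.
    pose proof (sv_bound b0 b1 b2 h n h Hg) as [Hs0 Hs1].
    replace (1 - sv b0 b1 b2 h n h - 1) with (- sv b0 b1 b2 h n h) by ring.
    rewrite Rabs_Ropp, Rabs_pos_eq by lra.
    pose proof (sv_U b0 b1 b2 h n h Hg). pose proof (HC (S n)).
    assert (Ha : 0 < INR N0) by (apply lt_0_INR; lia).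
    assert (Hle : INR N0 <= INR (S n)) by (apply le_INR; lia).
    assert (H1 : 1 < eps / (C + 1) * INR N0).
    { apply Rmult_lt_compat_r with (r := INR N0) in HN0; auto.
      rewrite Rinv_l in HN0 by lra. exact HN0. }
    assert (H2 : C + 1 < eps * INR N0).
    { apply Rmult_lt_compat_l with (r := C + 1) in H1; [|lra].
      replace ((C + 1) * (eps / (C + 1) * INR N0)) with (eps * INR N0) in H1 by (field; lra).
      lra. }
    assert (sv b0 b1 b2 h n h * INR N0 <= C) by nra.
    nra.
  - destruct (growing_cv (fun N => sum_f_R0 (ret_time b0 b1 b2 h) N)) as [m Hm].
    + intros n; simpl. pose proof (ret_time_bound b0 b1 b2 h (S n) Hg); lra.
    + exists (/ (3 * b0) * C). intros x [i ->].
      apply Rle_trans with (/ (3 * b0) * sum_f_R0 (fun n => INR n * ret_prob b0 b1 b2 h n) i).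
      * apply sum_le_scal. intros n; apply ret_time_bound; auto.
      * apply Rmult_le_compat_l; [left; apply Rinv_0_lt_compat; lra|].
        pose proof (weighted_sum b0 b1 b2 h i Hg). pose proof (HC i).
        pose proof (pos_INR i). pose proof (sv_bound b0 b1 b2 h i h Hg). nra.
    + exists m; exact Hm.
Qed.
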